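(* Let $G\in\mathcal{D}_n$ and let $\varphi_1,\varphi_2$ be two $\mathbb{T}$-gains on $G$. Then $\sigma(A(\Phi_1))=\sigma(A(\Phi_2))$ if and only if $\Re(\varphi_1(C))=\Re(\varphi_2(C))$ for all cycles $C$ of $G$, where $\Phi_j=(G,\varphi_j)$.
   Context: Graphs are finite, simple and undirected. $\mathcal{D}_n$ is the collection of all connected graphs $G$ on $n$ vertices such that for each $k$ with $3\le k\le n$, $G$ has at most one cycle of length $k$. $\mathbb{T}=\{z\in\mathbb{C}:|z|=1\}$. A $\mathbb{T}$-gain on $G$ is a map $\varphi$ from oriented edges to $\mathbb{T}$ with $\varphi(\overrightarrow{e_{ts}})=\varphi(\overrightarrow{e_{st}})^{-1}$; $A(\Phi)$ for $\Phi=(G,\varphi)$ is the Hermitian matrix with $(s,t)$ entry $\varphi(\overrightarrow{e_{st}})$ if $v_s\sim v_t$, else $0$; $\sigma(\cdot)$ denotes the spectrum. The gain $\varphi(\overrightarrow{C})$ of a directed cycle is the product of the gains of its oriented edges; the two directions of a cycle $C$ give conjugate gains, and $\Re(\varphi(C))$ denotes their common real part. *)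

(* Defs.v *)
From HB Require Import structures.
From mathcomp Require Import all_boot all_order all_algebra.
Set Implicit Arguments. Unset Strict Implicit. Unset Printing Implicit Defensive.
Import Order.TTheory GRing.Theory Num.Theory.
Local Open Scope ring_scope.

Definition simple_graph n (e : rel 'I_n) : Prop :=
  irreflexive e /\ symmetric e.

Definition connected_graph n (e : rel 'I_n) : Prop :=
  forall x y : 'I_n, connect e x y.

Definition is_cycle n (e : rel 'I_n) (s : seq 'I_n) : bool :=
  [&& (3 <= size s)%N, uniq s & cycle e s].

(* The edge set of the cycle listed by s (an edge is a 2-subset of vertices);
   two listings describe the same cycle (subgraph) iff they have the same
   edge set. *)
Definition cycle_edges n (s : seq 'I_n) : {set {set 'I_n}} :=
  [set [set x; next s x] | x in s].

(* D_n : connected simple graphs on n vertices with at most one cycle of each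
   length k (3 <= k <= n). *)
Definition in_Dn n (e : rel 'I_n) : Prop :=
  [/\ simple_graph e, connected_graph e &
      forall s1 s2 : seq 'I_n, is_cycle e s1 -> is_cycle e s2 ->
        size s1 = size s2 -> cycle_edges s1 = cycle_edges s2].

(* A T-gain on G: phi i j is the gain of the oriented edge from v_i to v_j;
   unit modulus, and phi j i = (phi i j)^-1 on edges.  Values on non-edges
   are irrelevant. *)
Definition T_gain (C : numClosedFieldType) n (e : rel 'I_n)
    (phi : 'I_n -> 'I_n -> C) : Prop :=
  forall i j, e i j -> `|phi i j| = 1 /\ phi j i = (phi i j)^-1.

Definition gain_adj (C : numClosedFieldType) n (e : rel 'I_n)
    (phi : 'I_n -> 'I_n -> C) : 'M[C]_n :=
  \matrix_(i, j) (if e i j then phi i j else 0).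

Definition cycle_gain (C : numClosedFieldType) n
    (phi : 'I_n -> 'I_n -> C) (s : seq 'I_n) : C :=
  \prod_(x <- s) phi x (next s x).

(* Equality of spectra (as multisets of eigenvalues): every scalar has the
   same algebraic multiplicity as an eigenvalue of A and of B. *)
Definition same_spectrum (C : numClosedFieldType) n (A B : 'M[C]_n) : Prop :=
  forall x : C, mup x (char_poly A) = mup x (char_poly B).

(* Main.v *)
Require Import Defs.
From HB Require Import structures.
From mathcomp Require Import all_boot all_order all_algebra.
From mathcomp Require Import fingroup perm.
From mathcomp Require Import zify.
Import Order.TTheory GRing.Theory Num.Theory.
Local Open Scope ring_scope.
Set Implicit Arguments. Unset Strict Implicit. Unset Printing Implicit Defensive.

Section PermAux.
Variable T : finType.
Implicit Types (s t : {perm T}) (x y : T).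
Local Open Scope group_scope.

Lemma porbit_s s x : porbit s (s x) = porbit s x.
Proof. by have := porbit_perm s 1 x; rewrite expg1. Qed.

Lemma mem_porbit_s s x y : (s y \in porbit s x) = (y \in porbit s x).
Proof. by rewrite -!eq_porbit_mem porbit_s. Qed.

Lemma mem_porbit_sV s x y : (s^-1 y \in porbit s x) = (y \in porbit s x).
Proof. by rewrite -{2}(permKV s y) mem_porbit_s. Qed.

Lemma porbit_sub s x (S : {set T}) :
  x \in S -> (forall y, y \in S -> s y \in S) -> porbit s x \subset S.
Proof.
move=> xS cS; apply/subsetP => y /porbitP [i ->].
elim: i => [|i IH]; first by rewrite expg0 perm1.
by rewrite expgSr permM; apply: cS.
Qed.

Lemma porbit_agree s t x :
  (forall y, y \in porbit t x -> s y = t y) -> porbit s x = porbit t x.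
Proof.
move=> H.
have E : forall i, (s ^+ i) x = (t ^+ i) x.
  elim=> [|i IH]; first by rewrite !expg0.
  by rewrite !expgSr !permM IH H // mem_porbit.
by apply/setP => y; apply/porbitP/porbitP => -[i ->]; exists i; rewrite E.
Qed.

Lemma porbit_fix s x : s x = x -> porbit s x = [set x].
Proof.
move=> sx; apply/eqP; rewrite eqEsubset porbit_sub ?inE //=.
  by rewrite sub1set porbit_id.
by move=> y; rewrite inE => /eqP ->; rewrite sx inE.
Qed.

Lemma card_porbit1 s x : (#|porbit s x| == 1%N) = (s x == x).
Proof.
apply/idP/eqP => [/cards1P [z Ez]|/porbit_fix ->]; last by rewrite cards1.
have : x \in porbit s x := porbit_id s x.
have : s x \in porbit s x by rewrite mem_porbit_s porbit_id.
by rewrite Ez !inE => /eqP -> /eqP ->.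
Qed.

Lemma porbit_moved s x y : (#|porbit s x| != 1%N) -> y \in porbit s x -> s y != y.
Proof.
move=> H yO; rewrite -card_porbit1.
by move: yO; rewrite -eq_porbit_mem => /eqP ->.
Qed.

Definition revf s (r : {set T} -> bool) x := if r (porbit s x) then s^-1 x else s x.

Lemma revf_in s r x : revf s r x \in porbit s x.
Proof.
rewrite /revf; case: ifP => _; first by rewrite mem_porbit_sV porbit_id.
by rewrite mem_porbit_s porbit_id.
Qed.

Lemma revf_inj s r : injective (revf s r).
Proof.
move=> x y Exy.
have Oxy : porbit s x = porbit s y.
  have h1 := revf_in s r x; have h2 := revf_in s r y.
  rewrite -eq_porbit_mem in h1; rewrite -eq_porbit_mem in h2.
  by rewrite -(eqP h1) -(eqP h2) Exy.
move: Exy; rewrite /revf Oxy; case: ifP => _; exact: perm_inj.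
Qed.

Definition revp s r := perm (@revf_inj s r).

Lemma revpE s r x : revp s r x = if r (porbit s x) then s^-1 x else s x.
Proof. by rewrite permE. Qed.

Lemma porbit_revp s r x : porbit (revp s r) x = porbit s x.
Proof.
case E: (r (porbit s x)).
  rewrite -(porbitV s); apply: porbit_agree => y; rewrite porbitV => yO.
  by rewrite revpE; move: yO; rewrite -eq_porbit_mem => /eqP ->; rewrite E.
apply: porbit_agree => y yO.
by rewrite revpE; move: yO; rewrite -eq_porbit_mem => /eqP ->; rewrite E.
Qed.

Lemma porbits_revp s r : porbits (revp s r) = porbits s.
Proof. by apply: eq_imset => x; rewrite porbit_revp. Qed.

Lemma odd_revp s r : odd_perm (revp s r) = odd_perm s.
Proof. by rewrite /odd_perm porbits_revp. Qed.

Lemma revpK s r r' : (forall x, r' (porbit s x) = r (porbit s x)) ->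
  revp (revp s r) r' = s.
Proof.
move=> H; apply/permP => x; rewrite revpE porbit_revp H.
case E: (r (porbit s x)); last by rewrite revpE E.
apply: (@perm_inj _ (revp s r)); rewrite permKV revpE porbit_s E.
by rewrite permK.
Qed.

End PermAux.

Section Gain.
Variables (C : numClosedFieldType) (n : nat) (e : rel 'I_n).
Hypothesis e_irr : irreflexive e.
Hypothesis e_sym : symmetric e.

Definition gA (phi : 'I_n -> 'I_n -> C) i j := gain_adj e phi i j.

Lemma gAE phi i j : gA phi i j = if e i j then phi i j else 0.
Proof. by rewrite /gA /gain_adj mxE. Qed.

Lemma gA_diag phi i : gA phi i i = 0.
Proof. by rewrite gAE e_irr. Qed.

Lemma gA_sym phi : T_gain e phi -> forall i j, gA phi j i = (gA phi i j)^-1.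
Proof.
move=> Tg i j; rewrite !gAE e_sym; case: ifP => eij; last by rewrite invr0.
by case: (Tg i j eij).
Qed.

Lemma gA_norm phi : T_gain e phi -> forall i j, e i j -> `|gA phi i j| = 1.
Proof. by move=> Tg i j eij; rewrite gAE eij; case: (Tg i j eij). Qed.

Definition ogS phi (s : {perm 'I_n}) (O : {set 'I_n}) :=
  \prod_(y in O) gA phi y (s y).

Lemma ogS_inv phi : T_gain e phi -> forall s x,
  ogS phi s^-1 (porbit s x) = (ogS phi s (porbit s x))^-1.
Proof.
move=> Tg s x; rewrite /ogS -prodfV.
rewrite (reindex_inj (@perm_inj _ s)) /=.
apply: eq_big => [y|y _]; first by rewrite mem_porbit_s.
by rewrite permK gA_sym.
Qed.

Definition MX (phi : 'I_n -> 'I_n -> C) := char_poly_mx (gain_adj e phi).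

Lemma MXE phi i j : MX phi i j = if i == j then 'X else - (gA phi i j)%:P.
Proof.
rewrite /MX /char_poly_mx !mxE -gAE.
by case: eqP => [->|_]; rewrite ?gA_diag ?subr0 ?mulr0n ?sub0r.
Qed.

Lemma PO phi (s : {perm 'I_n}) x :
  \prod_(i in porbit s x) MX phi i (s i) =
  if #|porbit s x| == 1%N then 'X
  else ((-1) ^+ #|porbit s x| * ogS phi s (porbit s x))%:P.
Proof.
case: ifP => H.
  have sx : s x = x by apply/eqP; rewrite -card_porbit1.
  by rewrite porbit_fix // big_set1 MXE sx eqxx.
rewrite rmorphM /= rmorphXn /= rmorphN1 /ogS rmorph_prod /= -prodrN.
apply: eq_bigr => y yO; rewrite MXE.
by have := porbit_moved (negbT H) yO; rewrite eq_sym => /negbTE ->.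
Qed.

End Gain.

Lemma unit_Re (C : numClosedFieldType) (a b : C) :
  `|a| = 1 -> `|b| = 1 -> 'Re a = 'Re b -> b != a -> b = a^-1.
Proof.
move=> na nb Rab nab.
have I2 : 'Im b ^+ 2 = 'Im a ^+ 2.
  have := normC2_Re_Im a; have := normC2_Re_Im b.
  by rewrite na nb Rab => -> /addrI.
have : ('Im b - 'Im a) * ('Im b + 'Im a) == 0 by rewrite -subr_sqr I2 subrr.
rewrite mulf_eq0 => /orP [/eqP H|/eqP H].
  by case/negP: nab; apply/eqP/eqCP; split => //; apply/eqP; rewrite -subr_eq0 H.
apply/eqCP; split; first by rewrite ReV na expr1n divr1.
rewrite ImV na expr1n divr1; apply/eqP; rewrite -subr_eq0 opprK H //.
Qed.

Lemma prod_porbits (R : comNzRingType) (T : finType) (s : {perm T}) (F : T -> R) :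
  \prod_i F i = \prod_(O in porbits s) \prod_(i | porbit s i == O) F i.
Proof. by rewrite (partition_big_imset (porbit s)). Qed.

Section Psi.
Variables (C : numClosedFieldType) (n : nat) (e : rel 'I_n).
Hypothesis e_irr : irreflexive e.
Hypothesis e_sym : symmetric e.
Variables (phi1 phi2 : 'I_n -> 'I_n -> C).
Hypothesis Tg1 : T_gain e phi1.
Hypothesis Tg2 : T_gain e phi2.
Implicit Types phi : 'I_n -> 'I_n -> C.

Definition rv k (s : {perm 'I_n}) (O : {set 'I_n}) :=
  (#|O| < k)%N && (ogS e phi2 s O != ogS e phi1 s O).
Definition Psi k s := revp s (rv k s).
Definition Dk k (s : {perm 'I_n}) := [forall x, #|porbit s x| < k]%N.
Definition term (phi : 'I_n -> 'I_n -> C) (s : {perm 'I_n}) :=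
  (-1) ^+ odd_perm s * \prod_i MX e phi i (s i).

Lemma ogS_Psi phi : T_gain e phi -> forall k s x,
  ogS e phi (Psi k s) (porbit s x) =
  if rv k s (porbit s x) then (ogS e phi s (porbit s x))^-1
  else ogS e phi s (porbit s x).
Proof.
move=> Tg k s x; rewrite -(ogS_inv e_sym Tg); case: ifP => H; apply: eq_bigr => y yO;
  by rewrite /Psi revpE; move: yO; rewrite -eq_porbit_mem => /eqP ->; rewrite H.
Qed.

Lemma rv_Psi k s x : rv k (Psi k s) (porbit s x) = rv k s (porbit s x).
Proof.
rewrite {1}/rv (ogS_Psi Tg1) (ogS_Psi Tg2); case: ifP => H //.
by rewrite (inj_eq (@invr_inj _)).
Qed.

Lemma PsiK k s : Psi k (Psi k s) = s.
Proof. by apply: revpK => x; rewrite rv_Psi. Qed.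

Lemma Dk_Psi k s : Dk k (Psi k s) = Dk k s.
Proof. by apply: eq_forallb => x; rewrite porbit_revp. Qed.

Definition HRe k := forall (s : {perm 'I_n}) x,
  (3 <= #|porbit s x| < k)%N -> (forall y, y \in porbit s x -> e y (s y)) ->
  'Re (ogS e phi1 s (porbit s x)) = 'Re (ogS e phi2 s (porbit s x)).

Lemma ogS_zero phi (s : {perm 'I_n}) (O : {set 'I_n}) y : y \in O -> ~~ e y (s y) -> ogS e phi s O = 0.
Proof.
move=> yO ney; rewrite /ogS (bigD1 y) //= gAE (negbTE ney) mul0r //.
Qed.

Lemma ogS_norm phi : T_gain e phi -> forall (s : {perm 'I_n}) (O : {set 'I_n}),
  (forall y, y \in O -> e y (s y)) -> `|ogS e phi s O| = 1.
Proof.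
move=> Tg s O H; rewrite /ogS normr_prod big1 // => y yO.
by rewrite (gA_norm Tg) // H.
Qed.

Lemma ogS_two phi : T_gain e phi -> forall (s : {perm 'I_n}) x,
  #|porbit s x| = 2 -> e x (s x) -> ogS e phi s (porbit s x) = 1.
Proof.
move=> Tg s x H2 ex.
have ssx : s (s x) = x by have := iter_porbit s x; rewrite H2.
have sxx : s x != x by rewrite -card_porbit1 H2.
have -> : porbit s x = [set x; s x].
  apply/eqP; rewrite eq_sym eqEcard cards2 eq_sym sxx H2 andbT.
  by rewrite subUset !sub1set porbit_id mem_porbit_s porbit_id.
rewrite /ogS big_setU1 /= ?inE 1?eq_sym // big_set1 ssx (gA_sym e_sym Tg) mulVf //.
by rewrite -normr_eq0 (gA_norm Tg) ?oner_eq0 // e_sym.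
Qed.

Lemma term_Psi k s : HRe k -> Dk k s -> term phi1 (Psi k s) = term phi2 s.
Proof.
move=> hre /forallP dk; rewrite /term odd_revp; congr (_ * _).
rewrite (prod_porbits (Psi k s)) (prod_porbits s) /Psi porbits_revp.
apply: eq_bigr => _ /imsetP [x _ ->].
under eq_bigl => i do rewrite porbit_revp eq_porbit_mem.
under [RHS]eq_bigl => i do rewrite eq_porbit_mem.
have := PO e_irr phi1 (revp s (rv k s)) x; rewrite porbit_revp => ->.
rewrite (PO e_irr); case: ifP => // H1; congr ((_ * _)%:P).
have := ogS_Psi Tg1 k s x; rewrite /Psi => ->.
case: ifP => rvO; last first.
  by move: rvO; rewrite /rv dk /= => /negbFE /eqP.
move: (rvO); rewrite /rv => /andP [ltk ne].
have [ae|] := boolP [forall y in porbit s x, e y (s y)]; last first.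
  rewrite negb_forall_in => /existsP [y /andP [yO ney]].
  by move: ne; rewrite (ogS_zero _ yO ney) (ogS_zero _ yO ney) eqxx.
have ae' : forall y, y \in porbit s x -> e y (s y) by move/forall_inP: ae.
have [le2|gt2] := leqP #|porbit s x| 2.
  have c2 : #|porbit s x| = 2.
    apply/eqP; rewrite eqn_leq le2 /=; move: H1.
    by case: #|_| (card_porbit_neq0 s x) => [|[|m]].
  by move: ne; rewrite !ogS_two // ?eqxx // ae' // porbit_id.
apply: esym; apply: unit_Re => //; try exact: ogS_norm Tg1 _ _ ae'; try exact: ogS_norm Tg2 _ _ ae'.
by apply: hre => //; rewrite gt2.
Qed.

Lemma sum_Psi k : HRe k ->
  \sum_(s | Dk k s) term phi2 s = \sum_(s | Dk k s) term phi1 s.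
Proof.
move=> hre; symmetry.
rewrite (reindex_inj (can_inj (@PsiK k))) /=.
apply: eq_big => [s|s ds]; first by rewrite Dk_Psi.
by apply: term_Psi => //; rewrite -Dk_Psi.
Qed.

End Psi.

Section OrbSeq.
Variable T : finType.
Implicit Types (s : {perm T}) (x y : T).

Definition oseq (s : {perm T}) x := traject s x #|porbit s x|.

Lemma oseq_uniq s x : uniq (oseq s x).
Proof. exact: uniq_traject_porbit. Qed.

Lemma oseq_mem s x : oseq s x =i porbit s x.
Proof. by move=> y; rewrite porbit_traject. Qed.

Lemma oseq_size s x : size (oseq s x) = #|porbit s x|.
Proof. by rewrite size_traject. Qed.

Lemma oseq_cycle s x : fcycle s (oseq s x).
Proof.
rewrite /oseq; have := iter_porbit s x; have := card_porbit_neq0 s x.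
case: #|_| => // m _ Hi /=.
rewrite -[X in rcons _ X]Hi iterSr -trajectSr.
exact: fpath_traject.
Qed.

Lemma oseq_next s x y : y \in oseq s x -> next (oseq s x) y = s y.
Proof. by move=> yt; rewrite (nextE (oseq_cycle s x) yt). Qed.

End OrbSeq.

Section Back.
Variables (C : numClosedFieldType) (n : nat) (e : rel 'I_n).
Hypothesis e_irr : irreflexive e.
Hypothesis e_sym : symmetric e.
Variables (phi1 phi2 : 'I_n -> 'I_n -> C).
Hypothesis Tg1 : T_gain e phi1.
Hypothesis Tg2 : T_gain e phi2.
Implicit Types phi : 'I_n -> 'I_n -> C.

Lemma oseq_is_cycle (s : {perm 'I_n}) x :
  (3 <= #|porbit s x|)%N -> (forall y, y \in porbit s x -> e y (s y)) ->
  is_cycle e (oseq s x).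
Proof.
move=> H3 He; apply/and3P; split; first by rewrite oseq_size.
  exact: oseq_uniq.
apply: (cycle_from_next (oseq_uniq s x)) => y yt; rewrite oseq_next // He // -oseq_mem //.
Qed.

Lemma cg_oseq phi (s : {perm 'I_n}) x :
  (forall y, y \in porbit s x -> e y (s y)) ->
  cycle_gain phi (oseq s x) = ogS e phi s (porbit s x).
Proof.
move=> He; rewrite /cycle_gain /ogS.
rewrite (eq_big_seq (fun y => gA e phi y (s y))); last first.
  by move=> y yt; rewrite oseq_next // gAE He // -oseq_mem.
rewrite big_uniq ?oseq_uniq //; apply: eq_bigl => y; exact: oseq_mem.
Qed.

Lemma HRe_of k :
  (forall t, is_cycle e t -> (size t < k)%N ->
     'Re (cycle_gain phi1 t) = 'Re (cycle_gain phi2 t)) ->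
  HRe e phi1 phi2 k.
Proof.
move=> H s x /andP [h3 hk] He.
rewrite -!cg_oseq //; apply: H; first exact: oseq_is_cycle.
by rewrite oseq_size.
Qed.

Lemma char_poly_term phi :
  char_poly (gain_adj e phi) = \sum_s term e phi s.
Proof. by []. Qed.

Lemma backward :
  (forall t, is_cycle e t ->
     'Re (cycle_gain phi1 t) = 'Re (cycle_gain phi2 t)) ->
  char_poly (gain_adj e phi1) = char_poly (gain_adj e phi2).
Proof.
move=> H; rewrite !char_poly_term.
have hre : HRe e phi1 phi2 n.+1 by apply: HRe_of => t ht _; exact: H.
have dk : forall s : {perm 'I_n}, Dk n.+1 s.
  move=> s; rewrite /Dk; apply/forallP => x; rewrite ltnS.
  by have := max_card (porbit s x); rewrite card_ord.
rewrite (eq_bigl (Dk n.+1)) => [|s]; last by rewrite dk.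
rewrite [RHS](eq_bigl (Dk n.+1)) => [|s]; last by rewrite dk.
exact: esym (sum_Psi e_irr e_sym Tg1 Tg2 hre).
Qed.

End Back.

Section Coef.
Variables (C : numClosedFieldType) (n : nat) (e : rel 'I_n).
Hypothesis e_irr : irreflexive e.
Implicit Types phi : 'I_n -> 'I_n -> C.

Definition fixc (s : {perm 'I_n}) := #|[set i | s i == i]|.
Definition movc (s : {perm 'I_n}) := #|[set i | s i != i]|.
Definition gm phi (s : {perm 'I_n}) := \prod_(i | s i != i) gA e phi i (s i).

Lemma term_coef phi s j : (term e phi s)`_j =
  if j == fixc s then (-1) ^+ odd_perm s * ((-1) ^+ movc s * gm phi s) else 0.
Proof.
rewrite /term (bigID (fun i => s i == i)) /=.
have -> : \prod_(i | s i == i) MX e phi i (s i) = 'X ^+ fixc s.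
  rewrite /fixc -prodr_const; apply: eq_big => [i|i /eqP H]; first by rewrite inE.
  by rewrite MXE // H eqxx.
have -> : \prod_(i | s i != i) MX e phi i (s i) =
          ((-1) ^+ movc s * gm phi s)%:P.
  rewrite rmorphM /= rmorphXn /= rmorphN1 /gm rmorph_prod /= /movc.
  have E (R : comNzRingType) (F : 'I_n -> R) :
    \prod_(i | s i != i) F i = \prod_(i in [set i | s i != i]) F i.
    by apply: eq_bigl => i; rewrite inE.
  rewrite !E -prodrN; apply: eq_bigr => i; rewrite inE => H.
  by rewrite MXE // eq_sym (negbTE H).
rewrite -(rmorph_sign (@polyC C)) coefCM coefXnM coefC.
case: ltngtP => H.
- by rewrite mulr0.
- by rewrite subn_eq0 leqNgt H /= mulr0.
- by rewrite H subnn eqxx.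
Qed.

End Coef.

Lemma orient (T : finType) (s p : {perm T}) (O : {set T}) x :
  O = porbit p x ->
  (forall y, y \in O -> s y = p y \/ s y = (p^-1)%g y) ->
  (forall y, y \in O -> s (s y) != y) ->
  (forall y, y \notin O -> s y = p y) ->
  s x = p x -> s = p.
Proof.
move=> EO H2 Hn Hoff sx.
have step : forall i, s ((p ^+ i)%g x) = p ((p ^+ i)%g x).
  elim=> [|i IH]; first by rewrite expg0 perm1.
  have yO : (p ^+ i)%g x \in O by rewrite EO mem_porbit.
  have zO : p ((p ^+ i)%g x) \in O by rewrite EO mem_porbit_s mem_porbit.
  rewrite expgSr permM.
  case: (H2 _ zO) => // H.
  have : s (s ((p ^+ i)%g x)) = (p ^+ i)%g x by rewrite IH H permK.
  by move/eqP; rewrite (negbTE (Hn _ yO)).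
apply/permP => w; case: (boolP (w \in O)) => [|wO]; last exact: Hoff.
by rewrite EO => /porbitP [i ->]; apply: step.
Qed.

Lemma set2_cases (T : finType) (a b c d : T) : a != b ->
  [set a; b] = [set c; d] -> (a = c /\ b = d) \/ (a = d /\ b = c).
Proof.
move=> ab E.
have ha : a \in [set c; d] by rewrite -E set21.
have hb : b \in [set c; d] by rewrite -E set22.
move: ha hb; rewrite !inE => /orP [] /eqP ha /orP [] /eqP hb.
- by move: ab; rewrite ha hb eqxx.
- by left.
- by right.
- by move: ab; rewrite ha hb eqxx.
Qed.

Lemma ReN (C : numClosedFieldType) (z : C) : 'Re (- z) = - 'Re z.
Proof. exact: raddfN. Qed.

Lemma ReSign (C : numClosedFieldType) m (z : C) :
  'Re ((-1) ^+ m * z) = (-1) ^+ m * 'Re z.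
Proof.
elim: m => [|m IH]; first by rewrite !expr0 !mul1r.
by rewrite exprS -mulrA mulN1r ReN IH mulN1r mulNr.
Qed.

Section Rho.
Variables (n : nat) (t : seq 'I_n).
Hypothesis Ut : uniq t.
Hypothesis k3 : (3 <= size t)%N.

Definition rho := perm (can_inj (prev_next Ut)).

Lemma rhoE y : rho y = next t y.
Proof. by rewrite permE. Qed.

Lemma rhoV y : (rho^-1)%g y = prev t y.
Proof. by apply: (@perm_inj _ rho); rewrite permKV rhoE next_prev. Qed.

Lemma next_out y : y \notin t -> next t y = y.
Proof. by move=> yt; rewrite next_nth (negbTE yt). Qed.

Lemma porbit_rho x : x \in t -> porbit rho x =i t.
Proof.
move=> xt y; apply/idP/idP.
  have : porbit rho x \subset [set z | z \in t].
    apply: porbit_sub; first by rewrite inE.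
    by move=> z; rewrite !inE rhoE mem_next.
  by move/subsetP => H /H; rewrite inE.
move=> yt; have := fconnect_cycle (cycle_next Ut) xt y; rewrite yt => /iter_findex.
move=> <-; apply/porbitP; exists (findex (next t) x y).
by rewrite permX; apply: eq_iter => z; rewrite rhoE.
Qed.

Lemma card_porbit_rho x : x \in t -> #|porbit rho x| = size t.
Proof. by move=> xt; rewrite (eq_card (porbit_rho xt)) (card_uniqP Ut). Qed.

Lemma rho_moved y : (rho y != y) = (y \in t).
Proof.
case: (boolP (y \in t)) => yt; last by rewrite rhoE next_out ?eqxx.
apply: (porbit_moved (x := y)); last exact: porbit_id.
by rewrite card_porbit_rho // neq_ltn (leq_trans _ k3) ?orbT.
Qed.

End Rho.
Arguments rho : simpl never.

Section Fwd.
Variables (C : numClosedFieldType) (n : nat) (e : rel 'I_n).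
Hypothesis e_irr : irreflexive e.
Hypothesis e_sym : symmetric e.
Hypothesis uniqC : forall s1 s2 : seq 'I_n, is_cycle e s1 -> is_cycle e s2 ->
  size s1 = size s2 -> cycle_edges s1 = cycle_edges s2.
Variable t : seq 'I_n.
Hypothesis ct : is_cycle e t.

Let Ut : uniq t. Proof. by case/and3P: ct. Qed.
Let k3 : (3 <= size t)%N. Proof. by case/and3P: ct. Qed.
Let ctc : path.cycle e t. Proof. by case/and3P: ct. Qed.

Let R := rho Ut.

Lemma fix_mov (s : {perm 'I_n}) : (fixc s + movc s)%N = n.
Proof.
rewrite /fixc /movc -[RHS](card_ord n) -(cardC [set i | s i == i]).
by congr (_ + _)%N; apply: eq_card => i; rewrite !inE.
Qed.

Lemma size_le : (size t <= n)%N.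
Proof. by rewrite -(card_uniqP Ut) -[X in (_ <= X)%N](card_ord n) max_card. Qed.

Lemma s_rho (s : {perm 'I_n}) : ~~ Dk (size t) s -> fixc s = (n - size t)%N ->
  (forall i, s i != i -> e i (s i)) -> s = R \/ s = (R^-1)%g.
Proof.
move=> nD hfix hal.
have [x hx] : exists x, (size t <= #|porbit s x|)%N.
  by move: nD; rewrite negb_forall => /existsP [x]; rewrite -leqNgt; exists x.
set O := porbit s x.
have hmov : movc s = size t.
  by have := fix_mov s; rewrite hfix; have := size_le; lia.
have O1 : #|O| != 1%N by rewrite neq_ltn (leq_trans _ hx) ?orbT // (leq_trans _ k3).
have OM : O = [set i | s i != i].
  apply/eqP; rewrite eqEcard; apply/andP; split.
    by apply/subsetP => y yO; rewrite inE (porbit_moved O1 yO).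
  by rewrite -/(movc s) hmov.
have cO : #|O| = size t by rewrite OM -/(movc s) hmov.
have movO : forall y, (s y != y) = (y \in O) by move=> y; rewrite OM inE.
have eO : forall y, y \in O -> e y (s y) by move=> y; rewrite -movO; exact: hal.
have ct' : is_cycle e (oseq s x) by apply: oseq_is_cycle => //; rewrite cO.
have CE := uniqC ct' ct (etrans (oseq_size s x) cO).
have Hy : forall y, y \in O -> y \in t /\ (s y = R y \/ s y = (R^-1)%g y).
  move=> y yO.
  have : [set y; s y] \in cycle_edges t.
    rewrite -CE; apply/imsetP; exists y; first by rewrite oseq_mem.
    by rewrite oseq_next // oseq_mem.
  case/imsetP => z zt Ez.
  have nys : y != s y by rewrite eq_sym movO.
  case: (set2_cases nys Ez) => [[yz sz]|[yE sz]].
    by split; [rewrite yz | left; rewrite sz rhoE yz].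
  by split; [rewrite yE mem_next | right; rewrite sz rhoV yE prev_next].
have xO : x \in O := porbit_id s x.
have Ot : O =i t.
  apply/subset_cardP; first by rewrite cO (card_uniqP Ut).
  by apply/subsetP => y /Hy [].
have xt : x \in t by rewrite -Ot.
have OR : O = porbit R x by apply/setP => y; rewrite porbit_rho // Ot.
have no2 : forall y, y \in O -> s (s y) != y.
  move=> y yO; apply/eqP => ssy.
  have : porbit s y \subset [set y; s y].
    apply: porbit_sub; first by rewrite set21.
    by move=> w; rewrite !inE => /orP [] /eqP ->; rewrite ?ssy eqxx ?orbT.
  move/subset_leq_card; rewrite cards2.
  have -> : porbit s y = O by apply/eqP; rewrite eq_porbit_mem.
  by rewrite cO => H; move: (leq_trans k3 H); case: (y != s y).
have offO : forall y, y \notin O -> s y = y /\ R y = y.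
  move=> y yO; split; first by apply/eqP; rewrite -[_ == _]negbK movO.
  by apply/eqP; rewrite -[_ == _]negbK rho_moved // -Ot.
case: (Hy x xO) => _ [] sx.
  left; apply: (orient OR) => // y yO.
    by case: (Hy y yO).
  by case: (offO y yO) => -> ->.
right; apply: (@orient _ _ _ O x) => //.
- by rewrite porbitV.
- by move=> y yO; rewrite invgK; case: (Hy y yO) => _ [] ->; [right|left].
- move=> y yO; case: (offO y yO) => -> Ry.
  by apply: (@perm_inj _ R); rewrite permKV Ry.
Qed.

Variables (phi1 phi2 : 'I_n -> 'I_n -> C).
Hypothesis Tg1 : T_gain e phi1.
Hypothesis Tg2 : T_gain e phi2.
Implicit Types phi : 'I_n -> 'I_n -> C.

Lemma gm_rho phi : gm e phi R = cycle_gain phi t.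
Proof.
rewrite /gm /cycle_gain big_uniq //; apply: eq_big => [i|i]; first by rewrite rho_moved.
by rewrite rho_moved // => it; rewrite rhoE gAE (next_cycle ctc it).
Qed.

Lemma gm_rhoV phi : T_gain e phi -> gm e phi (R^-1)%g = (gm e phi R)^-1.
Proof.
move=> Tg; rewrite /gm -prodfV [LHS](reindex_inj (@perm_inj _ R)).
apply: eq_big => [i|i _]; first by rewrite permK eq_sym.
by rewrite permK (gA_sym e_sym Tg).
Qed.

Lemma cg_norm phi : T_gain e phi -> `|cycle_gain phi t| = 1.
Proof.
move=> Tg; rewrite /cycle_gain normr_prod big_seq big1 // => i it.
by case: (Tg _ _ (next_cycle ctc it)).
Qed.

Lemma Re_gm phi : T_gain e phi -> forall s : {perm 'I_n},
  s = R \/ s = (R^-1)%g -> 'Re (gm e phi s) = 'Re (cycle_gain phi t).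
Proof.
move=> Tg s [->|->]; first by rewrite gm_rho.
by rewrite gm_rhoV // gm_rho ReV cg_norm // expr1n divr1.
Qed.

Definition alle (s : {perm 'I_n}) := [forall i, (s i != i) ==> e i (s i)].
Definition eps : C := (-1) ^+ odd_perm R * (-1) ^+ size t.

Lemma Re0 : 'Re (0 : C) = 0. Proof. exact: raddf0. Qed.

Lemma Re_coef phi : T_gain e phi -> forall s, ~~ Dk (size t) s ->
  'Re ((term e phi s)`_(n - size t)%N) =
  if ((n - size t)%N == fixc s) && alle s then eps * 'Re (cycle_gain phi t) else 0.
Proof.
move=> Tg s nD; rewrite term_coef //; case: eqP => hf /=; last exact: Re0.
case: (boolP (alle s)) => al.
  have hal : forall i, s i != i -> e i (s i).
    by move=> i; move/forallP: al => /(_ i) /implyP.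
  have hs := s_rho nD (esym hf) hal.
  have hmov : movc s = size t by have := fix_mov s; rewrite -hf; have := size_le; lia.
  have Hodd : odd_perm s = odd_perm R by case: hs => ->; rewrite ?odd_permV.
  by rewrite hmov Hodd !ReSign (Re_gm Tg hs) /eps mulrA.
move: al; rewrite /alle negb_forall => /existsP [i]; rewrite negb_imply => /andP [mi ne].
by rewrite /gm (bigD1 i) //= gAE (negbTE ne) mul0r !mulr0 Re0.
Qed.

Lemma ReSum (I : finType) (P : pred I) (F : I -> C) :
  'Re (\sum_(i | P i) F i) = \sum_(i | P i) 'Re (F i).
Proof. exact: raddf_sum. Qed.

Lemma sum_cst (I : finType) (P : pred I) (c : C) :
  \sum_(i | P i) c = (\sum_(i | P i) (1 : C)) * c.
Proof. by rewrite mulr_suml; apply: eq_bigr => i _; rewrite mul1r. Qed.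

Lemma fwd_step :
  char_poly (gain_adj e phi1) = char_poly (gain_adj e phi2) ->
  HRe e phi1 phi2 (size t) ->
  'Re (cycle_gain phi1 t) = 'Re (cycle_gain phi2 t).
Proof.
move=> Hchar hre.
have S := sum_Psi e_irr e_sym Tg1 Tg2 hre.
have Hs : \sum_(s | ~~ Dk (size t) s) term e phi1 s =
          \sum_(s | ~~ Dk (size t) s) term e phi2 s.
  have H2 := Hchar; rewrite !char_poly_term in H2.
  rewrite (bigID (Dk (size t))) [X in _ = X](bigID (Dk (size t))) /= S in H2.
  exact: addrI H2.
have Hc := congr1 (fun p : {poly C} => 'Re (p`_(n - size t)%N)) Hs; simpl in Hc.
rewrite !coef_sum !ReSum in Hc.
rewrite (eq_bigr _ (fun s hs => Re_coef Tg1 hs)) in Hc.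
rewrite (eq_bigr _ (fun s hs => Re_coef Tg2 hs)) in Hc.
rewrite -!big_mkcondr /= in Hc.
rewrite (sum_cst _ (eps * _)) [X in _ = X](sum_cst _ (eps * _)) in Hc.
have [x0 x0t] : exists x0, x0 \in t.
  by case: (t) k3 => // y ? _; exists y; rewrite mem_head.
have PR : ~~ Dk (size t) R && (((n - size t)%N == fixc R) && alle R).
  apply/andP; split.
    rewrite /Dk negb_forall; apply/existsP; exists x0.
    by rewrite card_porbit_rho // ltnn.
  apply/andP; split.
    rewrite /fixc; apply/eqP.
    have -> : #|[set i | R i == i]| = #|[predC [pred i | i \in t]]|.
      by apply: eq_card => i; rewrite !inE -rho_moved // negbK.
    have := cardC [pred i | i \in t]; rewrite card_ord.
    have -> : #|[pred i | i \in t]| = size t by rewrite -(card_uniqP Ut); apply: eq_card.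
    by move=> H; rewrite -[X in (X - _)%N]H addKn.
  apply/forallP => i; apply/implyP; rewrite rho_moved // => it.
  by rewrite rhoE; exact: next_cycle ctc it.
have N0 : \sum_(s | ~~ Dk (size t) s && (((n - size t)%N == fixc s) && alle s)) (1 : C) != 0.
  rewrite (bigD1 R PR) paddr_eq0 ?oner_eq0 ?ler01 //.
  by apply: sumr_ge0 => *; exact: ler01.
have ne : eps != 0 by rewrite /eps mulf_neq0 // signr_eq0.
exact: (mulfI ne (mulfI N0 Hc)).
Qed.

End Fwd.

Lemma mup_eq_poly (F : closedFieldType) (p q : {poly F}) :
  p \is monic -> q \is monic -> size p = size q ->
  (forall x, mup x p = mup x q) -> p = q.
Proof.
move=> mp mq sz H.
have [rp Ep] := closed_field_poly_normal p.
have [rq Eq] := closed_field_poly_normal q.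
rewrite (monicP mp) scale1r in Ep; rewrite (monicP mq) scale1r in Eq.
have Cnt : forall x, count_mem x rp = count_mem x rq.
  by move=> x; have := H x; rewrite Ep Eq !mu_prod_XsubC.
have szr : size rp = size rq.
  by have := sz; rewrite Ep Eq !size_prod_XsubC => -[].
have [s' sub pe] : exists2 s', subseq s' rq & perm_eq rp s'.
  by apply/count_subseqP => x; rewrite Cnt.
have E : s' = rq.
  apply/eqP; rewrite -(size_subseq_leqif sub).2.
  by rewrite -(perm_size pe) szr.
by rewrite Ep Eq; apply: perm_big; rewrite -E.
Qed.

Unset Implicit Arguments.

Theorem theorem3p5 (C : numClosedFieldType) (n : nat) (e : rel 'I_n)
    (phi1 phi2 : 'I_n -> 'I_n -> C) :
  in_Dn e -> T_gain e phi1 -> T_gain e phi2 ->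
  (same_spectrum (gain_adj e phi1) (gain_adj e phi2) <->
   (forall s : seq 'I_n, is_cycle e s ->
      'Re (cycle_gain phi1 s) = 'Re (cycle_gain phi2 s))).
Proof.
case=> [[irr sym] _ uC] Tg1 Tg2; split; last first.
  by move=> H x; rewrite (backward irr sym Tg1 Tg2 H).
move=> hs.
have Hchar : char_poly (gain_adj e phi1) = char_poly (gain_adj e phi2).
  by apply: mup_eq_poly; rewrite ?char_poly_monic ?size_char_poly.
suff H : forall k (t : seq 'I_n), is_cycle e t -> (size t < k)%N ->
    'Re (cycle_gain phi1 t) = 'Re (cycle_gain phi2 t).
  by move=> t ct; exact: H _ t ct (ltnSn _).
elim=> [//|k IH] t ct; rewrite ltnS leq_eqVlt => /orP [/eqP Hk|]; last exact: IH.
apply: (fwd_step irr sym uC ct Tg1 Tg2 Hchar).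
by rewrite Hk; exact: HRe_of IH.
Qed.
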